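(* Let $H$ and $G$ be Abelian groups that are isotyped (with respect to the variety of Abelian groups), and suppose one of them is free and finitely generated. Then $H$ and $G$ are isomorphic.
   Context: Let $\Theta$ be the variety of Abelian groups. $X^0=\{x_1,x_2,\dots\}$ is an infinite set of variables; for finite $X\subset X^0$, $W(X)$ is the free $\Theta$-algebra on $X$; homomorphisms $W(X)\to H$ are points. For each finite $X$, the set $\Phi(X)$ of formulas of sort $X$ is defined inductively: equalities $w\equiv w'$ ($w,w'\in W(X)$) are in $\Phi(X)$; $\Phi(X)$ is closed under $\neg,\vee,\wedge$ and $\exists x$ for $x\in X$; and for each homomorphism $s:W(X)\to W(Y)$ and $u\in\Phi(X)$, $s_*u\in\Phi(Y)$. Values $Val^X_H(u)\subseteq\mathrm{Hom}(W(X),H)$: $Val^X_H(w\equiv w')=\{\mu:\mu(w)=\mu(w')\}$; $\mu\in Val^X_H(\exists x\,u)$ iff some point $\nu$ agreeing with $\mu$ on $X\setminus\{x\}$ lies in $Val^X_H(u)$; $\vee,\wedge,\neg$ are union, intersection, complement; $\mu\in Val^Y_H(s_*u)$ iff $\mu\circ s\in Val^X_H(u)$. The logical kernel of $\mu:W(X)\to H$ is $LKer(\mu)=\{u\in\Phi(X):\mu\in Val^X_H(u)\}$; a set $T\subseteq\Phi(X)$ is an $X$-type of $H$ if $T=LKer(\mu)$ for some point $\mu:W(X)\to H$. Algebras $H_1,H_2\in\Theta$ are isotyped if for every finite $X\subset X^0$, every $X$-type of $H_1$ is an $X$-type of $H_2$ and vice versa. *)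

(* Defs.v *)
From HB Require Import structures.
From mathcomp Require Import all_boot all_order all_algebra.
From mathcomp Require Import finmap.
Set Implicit Arguments. Unset Strict Implicit. Unset Printing Implicit Defensive.
Import Order.TTheory GRing.Theory Num.Theory.
Local Open Scope ring_scope.
Local Open Scope fset_scope.

(* Variables X^0 = nat; a finite set of variables is X : {fset nat}. *)

(* W(X): the free abelian group on X, realised as Z^X (finitely supported
   since X is finite). *)
Definition W (X : {fset nat}) : zmodType := {ffun X -> int}.

Definition gen (X : {fset nat}) (x : X) : W X := [ffun z => ((z == x) : nat)%:Z].

Inductive formula : {fset nat} -> Type :=
| Feq  (X : {fset nat}) (w w' : W X) : formula X
| Fneg (X : {fset nat}) : formula X -> formula X
| For  (X : {fset nat}) : formula X -> formula X -> formula X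
| Fand (X : {fset nat}) : formula X -> formula X -> formula X
| Fex  (X : {fset nat}) (x : X) : formula X -> formula X
| Fsub (X Y : {fset nat}) (s : {additive W X -> W Y}) : formula X -> formula Y.

(* mu \in Val^X_H(u); mu is meant to be a point (homomorphism W(X) -> H). *)
Fixpoint holds (H : zmodType) (X : {fset nat}) (u : formula X) : (W X -> H) -> Prop :=
  match u in formula X0 return (W X0 -> H) -> Prop with
  | Feq _ w w' => fun mu => mu w = mu w'
  | Fneg _ u1 => fun mu => ~ holds u1 mu
  | For _ u1 u2 => fun mu => holds u1 mu \/ holds u2 mu
  | Fand _ u1 u2 => fun mu => holds u1 mu /\ holds u2 mu
  | Fex X0 x u1 => fun mu =>
      exists nu : {additive W X0 -> H},
        (forall y : X0, y != x -> nu (gen y) = mu (gen y)) /\ holds u1 nu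
  | Fsub _ _ s u1 => fun mu => holds u1 (mu \o s)
  end.

Definition LKer (H : zmodType) (X : {fset nat}) (mu : {additive W X -> H})
  : formula X -> Prop := fun u => holds u mu.

Definition is_type (H : zmodType) (X : {fset nat}) (T : formula X -> Prop) : Prop :=
  exists mu : {additive W X -> H}, forall u, T u <-> LKer mu u.

Definition isotyped (H1 H2 : zmodType) : Prop :=
  forall X : {fset nat},
    (forall T, is_type H1 T -> @is_type H2 X T) /\
    (forall T, is_type H2 T -> @is_type H1 X T).

Definition free_fg (H : zmodType) : Prop :=
  exists (n : nat) (e : 'I_n -> H),
    forall h : H, exists! c : {ffun 'I_n -> int}, h = \sum_(i < n) e i *~ c i.

Definition isomorphic (H G : zmodType) : Prop :=
  exists f : {additive H -> G}, bijective f.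

(* Main.v *)
Require Import Defs.
From HB Require Import structures.
From mathcomp Require Import all_boot all_algebra finmap.
From Stdlib Require Import ClassicalEpsilon.
Set Implicit Arguments. Unset Strict Implicit. Unset Printing Implicit Defensive.
Import GRing.Theory.
Local Open Scope ring_scope.
Local Open Scope fset_scope.

Definition mk_add (A B : zmodType) (g : A -> B) (Hg : zmod_morphism g) : {additive A -> B} :=
  HB.pack g (GRing.isZmodMorphism.Build A B g Hg).
Lemma mk_addE (A B : zmodType) (g : A -> B) (Hg : zmod_morphism g) x : mk_add Hg x = g x.
Proof. by []. Qed.

Section S.
Variable (Y : {fset nat}) (K : zmodType).
Definition ptf (v : Y -> K) (w : W Y) : K := \sum_(z : Y) v z *~ w z.
Lemma ptf_morph v : zmod_morphism (ptf v).
Proof.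
move=> a b; rewrite /ptf -sumrB; apply: eq_bigr => z _.
by rewrite !ffunE mulrzBr.
Qed.
Definition pt v := mk_add (ptf_morph v).
Lemma pt_gen v z : pt v (gen z) = v z.
Proof.
rewrite mk_addE /ptf (bigD1 z) //= big1 => [|z' nz]; rewrite /gen ffunE.
  by rewrite eqxx addr0.
by rewrite (negbTE nz).
Qed.
Lemma W_decomp (w : W Y) : w = \sum_(z : Y) gen z *~ w z.
Proof.
apply/ffunP => z; rewrite sum_ffunE (bigD1 z) //= big1 => [|z' nz]; rewrite ffunMzE /gen ffunE.
  by rewrite eqxx addr0 /= mulrzz mul1r.
have E : (z == z') = false by apply/negbTE; rewrite eq_sym.
by rewrite E mul0rz.
Qed.
Lemma add_ext (f : {additive W Y -> K}) w : f w = \sum_(z : Y) f (gen z) *~ w z.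
Proof. by rewrite {1}(W_decomp w) raddf_sum; apply: eq_bigr => z _; rewrite raddfMz. Qed.
Lemma add_eq (f g : {additive W Y -> K}) : (forall z, f (gen z) = g (gen z)) -> forall w, f w = g w.
Proof. by move=> E w; rewrite !add_ext; apply: eq_bigr => z _; rewrite E. Qed.
End S.

Ltac lk := rewrite /LKer; cbn [holds].

Section Core.
Variables (H G : zmodType) (n : nat) (e : 'I_n -> H).
Hypothesis basis : forall h : H, exists! c : {ffun 'I_n -> int}, h = \sum_(i < n) e i *~ c i.

Definition Yn : {fset nat} := seq_fset tt (iota 0 n.+1).
Lemma idx_in (i : 'I_n.+1) : (i : nat) \in Yn.
Proof. by rewrite seq_fsetE mem_iota /= ltn_ord. Qed.
Definition idx (i : 'I_n.+1) : Yn := [` idx_in i].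
Definition genI i : W Yn := gen (idx i).
Definition wid (i : 'I_n) : 'I_n.+1 := widen_ord (leqnSn n) i.
Definition yv := idx ord_max.
Definition lin (c : 'rV[int]_n) : W Yn := \sum_(i < n) genI (wid i) *~ c 0 i.

Lemma lin_add (K : zmodType) (f : {additive W Yn -> K}) c :
  f (lin c) = \sum_(i < n) f (genI (wid i)) *~ c 0 i.
Proof. by rewrite raddf_sum; apply: eq_bigr => i _; rewrite raddfMz. Qed.

Lemma wid_neq i : idx (wid i) != yv.
Proof. by apply/negP => /eqP/(congr1 val) /= E; move: (ltn_ord i); rewrite E ltnn. Qed.

Definition vH (z : Yn) : H := if insub (val z) : option 'I_n is Some j then e j else 0.
Definition mu := pt vH.
Lemma mu_wid i : mu (genI (wid i)) = e i.
Proof. by rewrite /genI pt_gen /vH /= valK. Qed.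
Lemma mu_max : mu (genI ord_max) = 0.
Proof. by rewrite /genI pt_gen /vH /= insubN // ltnn. Qed.
Lemma mu_lin c : mu (lin c) = \sum_(i < n) e i *~ c 0 i.
Proof. by rewrite lin_add; apply: eq_bigr => i _; rewrite mu_wid. Qed.

Lemma coord_ex h : exists c : 'rV[int]_n, h = \sum_(i < n) e i *~ c 0 i.
Proof.
have [c [Hc _]] := basis h; exists (\row_i c i).
by rewrite Hc; apply: eq_bigr => i _; rewrite mxE.
Qed.
Definition coord h := proj1_sig (constructive_indefinite_description _ (coord_ex h)).
Lemma coordP h : h = \sum_(i < n) e i *~ coord h 0 i.
Proof. exact: (proj2_sig (constructive_indefinite_description _ (coord_ex h))). Qed.
Lemma coordU h (c : 'rV[int]_n) : h = \sum_(i < n) e i *~ c 0 i -> c = coord h.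
Proof.
move=> Hc; have [c0 [_ U]] := basis h.
have F1 : c0 = [ffun i => c 0 i].
  by apply: U; rewrite {1}Hc; apply: eq_bigr => i _; rewrite ffunE.
have F2 : c0 = [ffun i => coord h 0 i].
  by apply: U; rewrite {1}(coordP h); apply: eq_bigr => i _; rewrite ffunE.
apply/rowP => i; move: (congr1 (fun f : {ffun 'I_n -> int} => f i) (etrans (esym F1) F2)).
by rewrite !ffunE.
Qed.
Lemma comb_inj (c c' : 'rV[int]_n) :
  \sum_(i < n) e i *~ c 0 i = \sum_(i < n) e i *~ c' 0 i -> c = c'.
Proof. by move=> E; rewrite (coordU E) -(coordU (erefl _)). Qed.
Lemma comb0 (c : 'rV[int]_n) : \sum_(i < n) e i *~ c 0 i = 0 -> c = 0.
Proof.
move=> E; apply: comb_inj; rewrite E big1 // => i _; by rewrite mxE mulr0z.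
Qed.
Lemma tfree (x : H) (d : int) : d != 0 -> x *~ d = 0 -> x = 0.
Proof.
move=> nd E.
have : \row_j (coord x 0 j * d) = 0.
  apply: comb0; apply: (etrans _ E); rewrite [in RHS](coordP x) mulrz_suml; apply: eq_bigr => i _.
  by rewrite mxE mulrzA.
move=> E2; rewrite (coordP x) big1 // => i _.
move/rowP: E2 => /(_ i); rewrite !mxE => /eqP; rewrite mulf_eq0 (negbTE nd) orbF.
by move/eqP => ->; rewrite mulr0z.
Qed.

Lemma surj (nu : {additive W Yn -> G}) (Hnu : forall u, LKer mu u <-> LKer nu u)
  (toH : forall T, is_type G T -> @is_type H Yn T) (g : G) :
  exists c : 'rV[int]_n, nu (lin c) = g.
Proof.
pose vG (z : Yn) := if z == yv then g else nu (gen z).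
pose Q := pt vG.
have [A HA] := toH (LKer Q) (ex_intro _ Q (fun u => iff_refl _)).
have QnuE : forall c, Q (lin c) = nu (lin c).
  move=> c; rewrite !lin_add; apply: eq_bigr => i _.
  by rewrite /genI pt_gen /vG (negbTE (wid_neq i)).
have Qmax : Q (genI ord_max) = g by rewrite /genI pt_gen /vG eqxx.
pose M : 'M[int]_n := \matrix_(i, j) coord (A (genI (wid i))) 0 j.
have A_lin : forall c, A (lin c) = \sum_j e j *~ (c *m M) 0 j.
  move=> c; rewrite lin_add.
  transitivity (\sum_i \sum_j e j *~ (M i j * c 0 i)).
    apply: eq_bigr => i _; rewrite {1}(coordP (A (genI (wid i)))) mulrz_suml.
    by apply: eq_bigr => j _; rewrite mxE -mulrzA.
  rewrite exchange_big; apply: eq_bigr => j _; rewrite mxE mulrz_sumr.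
  by apply: eq_bigr => i _; rewrite mulrC.
have Hdet : \det M != 0.
  apply/negP => /det0P [v nv vM]; move/negP: nv; apply; apply/eqP.
  have h1 : LKer A (Feq (lin v) 0).
    lk; rewrite A_lin vM raddf0 big1 // => j _; by rewrite mxE mulr0z.
  have h2 := proj2 (HA _) h1.
  have h3 : LKer nu (Feq (lin v) 0).
    by move: h2; lk; rewrite -QnuE !raddf0.
  have h4 := proj2 (Hnu _) h3.
  by apply: comb0; rewrite -mu_lin; move: h4; lk; rewrite raddf0.
pose h := A (genI ord_max).
pose y := coord h. pose d := \det M. pose m := y *m \adj M.
have mM : m *m M = d *: y by rewrite -mulmxA mul_adj_mx mul_mx_scalar.
have Alm : A (lin m) = h *~ d.
  rewrite A_lin mM [in RHS](coordP h) mulrz_suml; apply: eq_bigr => j _.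
  by rewrite mxE -mulrzA mulrC.
pose F3 := Fex yv (Feq (lin m) (genI ord_max *~ d)).
have h1 : LKer A F3.
  by rewrite /F3; lk; exists A; split => //; rewrite Alm raddfMz.
have [nu' [agr eqn]] := proj2 (HA F3) h1.
have h3 : LKer nu F3.
  exists nu'; split => // z nz; by rewrite agr // pt_gen /vG (negbTE nz).
have [nu'' [agr' eqn']] := proj2 (Hnu F3) h3.
have Hx : nu'' (lin m) = mu (lin m).
  by rewrite !lin_add; apply: eq_bigr => i _; rewrite /genI agr' // wid_neq.
pose t := nu'' (genI ord_max).
pose m' := coord t.
have mm' : m = \row_j (m' 0 j * d).
  apply: comb_inj; rewrite -mu_lin -Hx eqn' raddfMz -/t [in LHS](coordP t) mulrz_suml.
  by apply: eq_bigr => j _; rewrite mxE mulrzA.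
have Alm' : A (lin m) = A (lin m') *~ d.
  rewrite mm' !lin_add mulrz_suml; apply: eq_bigr => i _; by rewrite mxE mulrzA.
have hE : h = A (lin m').
  apply/eqP; rewrite -subr_eq0; apply/eqP; apply: (tfree Hdet).
  by rewrite mulrzBl -Alm -Alm' subrr.
exists m'.
have h5 : LKer A (Feq (genI ord_max) (lin m')) by lk; rewrite -hE.
by have := proj2 (HA _) h5; lk; rewrite Qmax QnuE => ->.
Qed.

Lemma core : isotyped H G -> isomorphic H G.
Proof.
move=> iso; have [toG toH] := iso Yn.
have [nu Hnu] : is_type G (LKer mu) by apply: toG; exists mu.

pose f h := nu (lin (coord h)).
have coordB a b : coord (a - b) = coord a - coord b.
  symmetry; apply: coordU; rewrite {1}(coordP a) {1}(coordP b) -sumrB.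
  by apply: eq_bigr => i _; rewrite !mxE mulrzBr.
have linB c c' : lin (c - c') = lin c - lin c'.
  by rewrite /lin -sumrB; apply: eq_bigr => i _; rewrite !mxE mulrzBr.
have fM : zmod_morphism f by move=> a b; rewrite /f coordB linB raddfB.
pose F := mk_add fM.
have finj : injective F.
  move=> a b; rewrite !mk_addE => E.
  have h0 : f (a - b) = 0 by rewrite fM E subrr.
  have : LKer nu (Feq (lin (coord (a-b))) 0) by lk; rewrite raddf0.
  move/(proj2 (Hnu _)); lk; rewrite raddf0 mu_lin => /comb0 c0.
  apply/eqP; rewrite -subr_eq0; apply/eqP.
  by rewrite (coordP (a - b)) c0 big1 // => i _; rewrite mxE mulr0z.
have fsurj : forall g, exists h, F h = g.
  move=> g; have [c Hc] := surj Hnu toH g; exists (\sum_i e i *~ c 0 i).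
  by rewrite mk_addE /f -(coordU (erefl _)).
exists F.
pose Finv g := proj1_sig (constructive_indefinite_description _ (fsurj g)).
exists Finv => [h|g]; last exact: (proj2_sig (constructive_indefinite_description _ (fsurj g))).
apply: finj; exact: (proj2_sig (constructive_indefinite_description _ (fsurj (F h)))).
Qed.
End Core.

Lemma iso_sym (H G : zmodType) : isomorphic H G -> isomorphic G H.
Proof.
case=> f [g fg gf].
have gM : zmod_morphism g by move=> a b; apply: (can_inj fg); rewrite raddfB !gf.
by exists (mk_add gM); exists f.
Qed.

Lemma isot_sym (H G : zmodType) : isotyped H G -> isotyped G H.
Proof. by move=> I X; have [a b] := I X; split. Qed.

Theorem mainTheorem8 (H G : zmodType) :
  isotyped H G -> free_fg H \/ free_fg G -> isomorphic H G.
Proof.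
move=> I [[n [e B]]|[n [e B]]]; first exact: (@core H G n e B I).
by apply: iso_sym; exact: (@core G H n e B (isot_sym I)).
Qed.
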